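(* Let $w\ge 2$ and $n$ be positive integers such that $n\equiv 1\pmod{w-1}$ and $n(n-1)-n(w-1)(w-2)\equiv (2k+1)(w-1)\pmod{w(w-1)}$ for some integer $k\in[0,\frac{w-3}{2}]$. Let $B(n)=\left\lfloor\frac{n(n-1-(w-1)(w-2))}{w(w-1)}\right\rfloor$. If $\mathcal C$ is a balanced $(n,2w-2,w)_3$ code of size $B(n)+n$, then $\mathcal C$ contains a codeword which is neither of type $1^w$ nor of type $1^{w-2}2^1$.
   Context: A ternary code of length $n$ is a subset of $\{0,1,2\}^n$; the $\ell_1$-distance is $\sum_i|u_i-v_i|$ and the $\ell_1$-weight of $u$ is its distance to $0$. An $(n,d,w)_3$ code has all codewords of $\ell_1$-weight $w$ and pairwise $\ell_1$-distance at least $d$. A codeword is of type $1^a2^b$ if exactly $a$ of its coordinates equal $1$ and exactly $b$ equal $2$ (so $a+2b=w$). The support of $u$ is $\{i:u_i\ne0\}$. A code is balanced if the supports of its codewords, viewed as vertex sets of cliques in $K_n$ on $[n]$, form an edge-decomposition of $K_n$. *)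

(* Defs.v *)
From mathcomp Require Import all_boot all_order all_algebra.
Set Implicit Arguments. Unset Strict Implicit. Unset Printing Implicit Defensive.

Definition word (n : nat) := {ffun 'I_n -> 'I_3}.

(* l1-distance: sum_i |u_i - v_i|  (|a-b| = (a-b)+(b-a) with truncated nat subtraction) *)
Definition l1dist n (u v : word n) : nat :=
  \sum_(i < n) ((u i : nat) - v i + (v i - u i))%N.

Definition l1weight n (u : word n) : nat := \sum_(i < n) (u i : nat).

Definition supp n (u : word n) : {set 'I_n} := [set i | (u i : nat) != 0%N].

Definition is_type n (u : word n) (a b : nat) : bool :=
  (#|[set i | (u i : nat) == 1%N]| == a) && (#|[set i | (u i : nat) == 2%N]| == b).

Definition is_code n (d w : nat) (C : {set word n}) : Prop :=
  (forall u, u \in C -> l1weight u = w) /\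
  (forall u v, u \in C -> v \in C -> u != v -> d <= l1dist u v).

(* balanced: the supports (as cliques of K_n) edge-decompose K_n, i.e. every
   edge {i,j} (i <> j) lies in the support of exactly one codeword. *)
Definition balanced n (C : {set word n}) : Prop :=
  forall i j : 'I_n, i != j ->
    #|[set u in C | (i \in supp u) && (j \in supp u)]| = 1%N.

(* Main.v *)
Require Import Defs.
From mathcomp Require Import all_boot all_order all_algebra.
From mathcomp Require Import zify ring lra.
Import GRing.Theory Num.Theory.
Lemma count_pairs n (C : {set word n}) : balanced C ->
  (\sum_(c in C) #|supp c| * (#|supp c|).-1 = n * n.-1)%N.
Proof.
move=> bal.
pose F c (i j : 'I_n) := (if (j != i) && (i \in supp c) && (j \in supp c) then 1 else 0)%N.
have E1 c : (\sum_i \sum_j F c i j = #|supp c| * (#|supp c|).-1)%N.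
  rewrite (bigID (fun i => i \in supp c)) /=.
  rewrite [X in (_ + X)%N]big1 ?addn0; last first.
    by move=> i /negbTE H; apply: big1 => j _; rewrite /F H andbF.
  rewrite -sum_nat_const; apply: eq_bigr => i Hi.
  rewrite /F -big_mkcond /= sum1_card (cardsD1 i (supp c)) Hi /=.
  by rewrite add0n; apply: eq_card => j; rewrite in_setD1 -topredE /= andbT.
have E2 i j : (\sum_(c in C) F c i j = (j != i))%N.
  case: (eqVneq j i) => [->|Hji] /=.
    by apply: big1 => c _; rewrite /F eqxx.
  rewrite /F -big_mkcondr /= sum1_card.
  transitivity #|[set u in C | (i \in supp u) && (j \in supp u)]|; last first.
    by apply: bal; rewrite eq_sym.
  by apply: eq_card => c; rewrite inE -topredE /= Hji.
transitivity (\sum_(c in C) \sum_i \sum_j F c i j).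
  by apply: eq_bigr => c _; rewrite E1.
rewrite exchange_big /=.
rewrite (eq_bigr (fun _ => n.-1)) ?sum_nat_const ?card_ord //.
move=> i _; rewrite exchange_big /= (eq_bigr (fun j => (j != i : nat))); last by move=> j _; rewrite E2.
rewrite -[n in n.-1]card_ord -(cardC1 i) -sum1_card [RHS]big_mkcond /=.
by apply: eq_bigr => j _; rewrite !inE; case: (j != i).
Qed.

Lemma supp_type n (u : word n) a b : is_type u a b -> #|supp u| = (a + b)%N.
Proof.
move=> /andP[/eqP <- /eqP <-].
have -> : supp u = [set i | (u i : nat) == 1%N] :|: [set i | (u i : nat) == 2%N].
  by apply/setP=> i; rewrite !inE; case: (u i) => [[|[|[|]]]].
rewrite cardsU.
have -> : [set i | (u i : nat) == 1%N] :&: [set i | (u i : nat) == 2%N] = set0.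
  by apply/setP=> i; rewrite !inE; case: (u i) => [[|[|[|]]]].
by rewrite cards0 subn0.
Qed.

Local Open Scope ring_scope.
Lemma arith (v m k q a N : int) :
  0 <= v ->
  (m + 1) * m = N * (v + 1) * v + 2 * (v + 1) * a ->
  (m + 1) * (m + 1 - 1 - (v + 1) * v) = q * ((v + 2) * (v + 1)) + (2 * k + 1) * (v + 1) ->
  N = q + (m + 1) -> False.
Proof.
move=> hv h1 h2 h3.
have h4 : (v + 1) * (2 * a - 2 * q - 2 * k - 1) = 0.
  have -> : (v + 1) * (2 * a - 2 * q - 2 * k - 1) =
    ((m + 1) * m - N * (v + 1) * v - 2 * (v + 1) * a) * (-1)
    + ((m + 1) * (m + 1 - 1 - (v + 1) * v) - q * ((v + 2) * (v + 1)) - (2 * k + 1) * (v + 1))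
    - (N - q - (m + 1)) * ((v + 1) * v) by ring.
  rewrite h1 h2 h3; ring.
move/eqP: h4; rewrite mulf_eq0 => /orP[/eqP|/eqP]; lia.
Qed.

Theorem lemma4 (w n : nat) (C : {set word n}) :
  (2 <= w)%N -> (0 < n)%N ->
  n = 1 %[mod w.-1] ->
  (exists k : nat, (2 * k + 1 <= w - 2)%N /\
     ((n * (n - 1))%:Z - (n * (w - 1) * (w - 2))%:Z
        = ((2 * k + 1) * (w - 1))%:Z %[mod (w * (w - 1))%:Z])%Z) ->
  is_code (2 * w - 2) w C ->
  balanced C ->
  (#|C|%:Z = divz (n%:Z * (n%:Z - 1 - ((w - 1) * (w - 2))%:Z)) (w * (w - 1))%:Z
              + n%:Z)%R ->
  exists2 c, c \in C & ~~ is_type c w 0 && ~~ is_type c (w - 2) 1.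
Proof.
move=> hw hn _ [k [hk hmod]] _ bal hC.
case: (boolP [exists c in C, ~~ is_type c w 0 && ~~ is_type c (w - 2) 1]).
  by move/exists_inP.
rewrite negb_exists_in => /forall_inP Hall; exfalso.
have [v ev] : exists v, w = v.+2 by exists (w - 2)%N; lia.
have [m em] : exists m, n = m.+1 by exists (n - 1)%N; lia.
subst w n.
pose a := (\sum_(c in C) (is_type c v.+2 0 : nat))%N.
have hcount : (m.+1 * m = #|C| * (v.+1 * v) + 2 * v.+1 * a)%N.
  rewrite -[(m.+1 * m)%N]/(m.+1 * m.+1.-1)%N -(@count_pairs _ _ bal).
  rewrite /a big_distrr /= -sum_nat_const -big_split /=.
  apply: eq_bigr => c Hc.
  have := Hall c Hc; rewrite negb_and !negbK.
  case: (boolP (is_type c v.+2 0)) => [/supp_type -> _|_ /= /supp_type ->].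
    rewrite addn0 /=; lia.
  have -> : (v.+2 - 2 + 1 = v.+1)%N by lia.
  rewrite /=; lia.
have e1 : (v.+2 - 1 = v.+1)%N by lia.
have e2 : (v.+2 - 2 = v)%N by lia.
have e3 : (m.+1 - 1 = m)%N by lia.
rewrite e1 e2 e3 in hmod hC.
set M := ((v.+2 * v.+1)%N)%:Z in hmod hC.
set X := ((m.+1)%:Z * ((m.+1)%:Z - 1 - ((v.+1 * v)%N)%:Z)) in hC.
have hX : X = ((m.+1 * m)%N)%:Z - ((m.+1 * v.+1 * v)%N)%:Z.
  rewrite /X !PoszM; ring.
have hM : (0 < M)%R by rewrite /M ltz_nat muln_gt0.
have hr : ((((2 * k + 1) * v.+1)%N)%:Z %% M)%Z = (((2 * k + 1) * v.+1)%N)%:Z.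
  apply: modz_small; apply/andP; split => //.
  by rewrite /M ltz_nat ltn_pmul2r //; lia.
rewrite hr -hX in hmod.
have hdiv := divz_eq X M.
rewrite hmod in hdiv.
apply: (@arith v%:Z m%:Z k%:Z (X %/ M)%Z a%:Z #|C|%:Z) => //.
- rewrite (_ : (m%:Z + 1) * m%:Z = Posz (m.+1 * m)%N); last by rewrite PoszM intS addrC.
  by rewrite hcount PoszD !PoszM !intS; ring.

- transitivity X; first by rewrite /X !PoszM !intS; ring.
  rewrite {1}hdiv /M !PoszM !PoszD !intS /=; ring.
- by move: hC; rewrite intS (addrC 1).
Qed.
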